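(* Let $S$ be a numerical semigroup with embedding dimension $\mathrm e(S)\le 3$. Then $S$ is cyclotomic if and only if $S$ is symmetric.
   Context: A numerical semigroup is a submonoid $S$ of $(\mathbb N,+)$ with $\mathbb N\setminus S$ finite; $\mathrm e(S)$ is the cardinality of its unique minimal generating set. Its Frobenius number $\mathrm F(S)$ is the largest integer not in $S$; $S$ is symmetric if $S\cup(\mathrm F(S)-S)=\mathbb Z$. The semigroup polynomial is $\mathrm P_S(x)=(1-x)\sum_{s\in S}x^s$, and $S$ is cyclotomic if this monic integer polynomial has all its complex roots in the closed unit disc. *)

(* Defs.v *)
From mathcomp Require Import all_boot all_order all_algebra all_field.
Set Implicit Arguments. Unset Strict Implicit. Unset Printing Implicit Defensive.
Import Order.TTheory GRing.Theory Num.Theory.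

Definition numerical_semigroup (S : pred nat) : Prop :=
  [/\ S 0,
      (forall a b, S a -> S b -> S (a + b)) &
      exists N, forall n, N <= n -> S n].

Definition generates (A : seq nat) (S : pred nat) : Prop :=
  forall n, S n <-> exists c : seq nat,
     size c = size A /\ n = \sum_(i < size A) nth 0 c i * nth 0 A i.

Definition is_embdim (S : pred nat) (e : nat) : Prop :=
  (exists A, size A = e /\ generates A S) /\
  (forall A, generates A S -> e <= size A).

Definition inS (S : pred nat) (z : int) : bool := (0 <= z)%R && S `|z|%N.

Definition is_frobenius (S : pred nat) (f : int) : Prop :=
  ~~ inS S f /\ forall z : int, (f < z)%R -> inS S z.

Definition symmetric_semigroup (S : pred nat) : Prop :=
  exists f, is_frobenius S f /\ forall z : int, inS S z \/ inS S (f - z)%R.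

(* The semigroup polynomial (1-x) * sum_{s in S} x^s, computed with a bound N
   such that every n >= N lies in S: the coefficient of x^i is
   [i in S] - [i-1 in S], which vanishes for i > N. *)
Definition semigroup_poly (S : pred nat) (N : nat) : {poly int} :=
  \poly_(i < N.+1) ((S i)%:R - ((0 < i)%N && S i.-1)%:R)%R.

(* S cyclotomic: all complex roots of P_S lie in the closed unit disc.
   Roots of an integer polynomial are algebraic, so complex roots = roots
   in algC. *)
Definition cyclotomic_semigroup (S : pred nat) : Prop :=
  exists N, (forall n, N <= n -> S n) /\
    forall z : algC, root (map_poly intr (semigroup_poly S N)) z -> (`|z| <= 1)%R.

(* Main.v *)
Require Import Defs.
From mathcomp Require Import all_boot all_order all_algebra all_field.
From mathcomp Require Import zify ring lra.
From Stdlib Require Import Classical.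
Set Implicit Arguments. Unset Strict Implicit. Unset Printing Implicit Defensive.
Import Order.TTheory GRing.Theory Num.Theory.


Definition gen3 (S : pred nat) a b c :=
  forall s, S s <-> exists x y z, s = x * a + y * b + z * c.
Definition rep2 b c t := exists x y, t = x * b + y * c.

Lemma gen3_12 S a b c : gen3 S a b c -> gen3 S b a c.
Proof.
move=> H s; rewrite H; split=> -[x [y [z ->]]]; exists y, x, z; lia.
Qed.
Lemma gen3_23 S a b c : gen3 S a b c -> gen3 S a c b.
Proof.
move=> H s; rewrite H; split=> -[x [y [z ->]]]; exists x, z, y; lia.
Qed.
Lemma rep2C b c t : rep2 b c t -> rep2 c b t.
Proof. by move=> [x [y ->]]; exists y, x; lia. Qed.

Lemma mod_cancel d v k k' : coprime d v -> k < d -> k' < d ->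
  k * v = k' * v %[mod d] -> k = k'.
Proof.
move=> cop.
wlog le : k k' / k' <= k.
  move=> W hk hk' E; case: (leqP k' k) => h; first exact: W.
  apply/esym; apply: W => //; first exact: ltnW.

move=> hk hk' /eqP E.
rewrite eqn_mod_dvd in E; last by rewrite leq_mul2r le orbT.
rewrite -mulnBl Gauss_dvdl // in E.
have hlt : k - k' < d by lia.
case H0: (k - k') => [|x]; first lia.
rewrite H0 in E hlt; have := dvdn_leq (isT : 0 < x.+1) E; lia.
Qed.

Definition box (S : pred nat) n1 u v m1 d :=
  [/\ 0 < n1, 0 < m1, 0 < d,
   (forall s, S s <-> exists X a k, [/\ a < m1, k < d & s = X * n1 + a * u + k * v]) &
   (forall X a k X' a' k', a < m1 -> k < d -> a' < m1 -> k' < d ->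
      X * n1 + a * u + k * v = X' * n1 + a' * u + k' * v -> [/\ X = X', a = a' & k = k'])].

Lemma box_glue S n1 v u m1 m3 d al be :
  gen3 S n1 v u -> n1 = m1 * d -> u = m3 * d -> coprime m1 m3 -> coprime d v ->
  v = al * m1 + be * m3 -> 0 < m1 -> 0 < d -> box S n1 u v m1 d.
Proof.
move=> G hn1 hu c13 cdv hv m1p dp.
split => //; first by rewrite hn1 muln_gt0 m1p.
- move=> s; split.
  + move=> /G [x [y [z ->]]].
    set q := y %/ d; set k := y %% d; set zz := z + q * be.
    exists (x + q * al + (zz %/ m1) * m3), (zz %% m1), k.
    split; [exact: ltn_pmod | exact: ltn_pmod |].
    have hy : y = q * d + k by rewrite /q /k -divn_eq.
    have hz : zz = (zz %/ m1) * m1 + zz %% m1 by rewrite -divn_eq.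
    move: hz; rewrite /zz; set q' := (z + q * be) %/ m1; set a := (z + q * be) %% m1 => hz.
    rewrite hy hn1 hu hv.
    have -> : x * (m1 * d) + (q * d + k) * (al * m1 + be * m3) + z * (m3 * d)
      = x * m1 * d + k * (al * m1 + be * m3) + q * d * al * m1 + (z + q * be) * m3 * d by ring.
    rewrite hz; ring.
  + move=> [X [a [k [_ _ ->]]]]; apply/G.
    rewrite hn1 hu in G *.
    by exists X, k, a; ring.
- move=> X a k X' a' k' ha hk ha' hk' E.
  have Ed : (X * m1 + a * m3) * d + k * v = (X' * m1 + a' * m3) * d + k' * v.
    by rewrite -[LHS]/(_) ; move: E; rewrite hn1 hu => E; lia.
  have kk : k = k'.
    apply: (mod_cancel cdv hk hk').
    by rewrite -(modnMDl (X * m1 + a * m3)) Ed modnMDl.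
  subst k'.
  move/addIn: Ed => /eqP; rewrite eqn_pmul2r // => /eqP Ed.
  have aa : a = a'.
    apply: (mod_cancel c13 ha ha').
    by rewrite -(modnMDl X) Ed modnMDl.
  subst a'; move/addIn: Ed => /eqP; rewrite eqn_pmul2r // => /eqP ->.
  by [].
Qed.

Lemma mod_surj m1 m3 t : coprime m1 m3 -> 0 < m3 ->
  exists a, a < m3 /\ a * m1 = t %[mod m3].
Proof.
move=> cop m3p.
pose f (i : 'I_m3) : 'I_m3 := Ordinal (ltn_pmod (i * m1) m3p).
have finj : injective f.
  move=> i j /(congr1 val) /= E; apply/val_inj => /=.
  have cop' : coprime m3 m1 by rewrite coprime_sym.
  exact: (mod_cancel cop' (ltn_ord i) (ltn_ord j)).
have := inj_card_onto finj (leqnn _) (Ordinal (ltn_pmod t m3p)).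
move=> /codomP [x /(congr1 val) /= E].
by exists x; split => //; rewrite E modn_mod.
Qed.

Definition numerical_semigroup' (S : pred nat) : Prop :=
  [/\ S 0,
      (forall a b, S a -> S b -> S (a + b)) &
      exists N, forall n, N <= n -> S n].

Lemma coprime3 (S : pred nat) a b c g : (exists N, forall n, N <= n -> S n) -> gen3 S a b c ->
  g %| a -> g %| b -> g %| c -> g = 1.
Proof.
move=> [N HN] G ga gb gc.
have D s : S s -> g %| s.
  move=> /G [x [y [z ->]]].
  by rewrite !dvdn_add // dvdn_mull.
have h1 := D _ (HN N (leqnn _)).
have h2 := D _ (HN N.+1 (leqnSn _)).
move: h2; rewrite -addn1 dvdn_addr //.
by rewrite dvdn1 => /eqP.
Qed.

Lemma glue0 (S : pred nat) a v u c r : (exists N, forall n, N <= n -> S n) -> gen3 S a v u ->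
  0 < a -> 0 < u -> 0 < c -> (forall k, 0 < k < c -> ~ rep2 v u (k * a)) ->
  c * a = r * u -> exists m1 d, box S a u v m1 d.
Proof.
move=> NS G ap up cp cmin E.
set d := gcdn a u.
have dp : 0 < d by rewrite gcdn_gt0 ap.
set m1 := a %/ d; set m3 := u %/ d.
have ha : a = m1 * d by rewrite /m1 divnK // dvdn_gcdl.
have hu : u = m3 * d by rewrite /m3 divnK // dvdn_gcdr.
have c13 : coprime m1 m3.
  have h : gcdn m1 m3 * d = 1 * d by rewrite muln_gcdl -ha -hu mul1n.
  by rewrite /coprime; move/eqP: h; rewrite eqn_pmul2r.
have m1p : 0 < m1 by move: ap; rewrite ha muln_gt0 => /andP[].
have m3p : 0 < m3 by move: up; rewrite hu muln_gt0 => /andP[].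
have cdv : coprime d v.
  apply/eqP; apply: (coprime3 NS G).
  - exact: dvdn_trans (dvdn_gcdl _ _) (dvdn_gcdl _ _).
  - exact: dvdn_gcdr.
  - exact: dvdn_trans (dvdn_gcdl _ _) (dvdn_gcdr _ _).
have m3c : m3 <= c.
  apply: dvdn_leq => //.
  have E' : c * m1 = r * m3.
    apply/eqP; rewrite -(eqn_pmul2r dp) -!mulnA -ha -hu; exact/eqP.
  by rewrite -(@Gauss_dvdl _ _ m1) 1?coprime_sym // E' dvdn_mull.
have [al [alm hal]] := mod_surj v c13 m3p.
case: (leqP (al * m1) v) => hle.
- move: hal; move/esym/eqP; rewrite eqn_mod_dvd // => hdv.
  exists m1, d; apply: (box_glue G ha hu c13 cdv (al := al) (be := (v - al * m1) %/ m3)) => //.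
  by rewrite divnK // subnKC.
- exfalso.
  move: hal; move/eqP; rewrite eqn_mod_dvd; last exact: ltnW.
  move=> /dvdnP [g hg].
  have gp : 0 < g by case: g hg => [|g] /=; lia.
  have alp : 0 < al by case: al alm hle hg => [|al] /=; lia.
  apply: (cmin al); first by rewrite alp /=; exact: leq_trans alm m3c.
  exists d, g.
  have : al * m1 = v + g * m3 by lia.
  move=> h; rewrite ha mulnA h hu; ring.
Qed.

Definition minc a b c cc := forall k, 0 < k < cc -> ~ rep2 b c (k * a).

Lemma minc23 a b c cc : minc a b c cc -> minc a c b cc.
Proof. by move=> H k hk /rep2C; apply: H. Qed.

Lemma lt_r n1 n2 n3 c1 c3 r12 r13 r31 r32 :
  0 < n1 -> 0 < n2 -> 0 < n3 -> minc n1 n2 n3 c1 ->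
  c1 * n1 = r12 * n2 + r13 * n3 -> c3 * n3 = r31 * n1 + r32 * n2 ->
  0 < r31 -> 0 < r32 -> r13 < c3.
Proof.
move=> p1 p2 p3 m1 E1 E3 h31 h32.
case: (ltnP r13 c3) => // hle; exfalso.
have [t ht] : exists t, r13 = c3 + t by exists (r13 - c3); lia.
subst r13.
case: (leqP c1 r31) => h.
- have [s hs] : exists s, r31 = c1 + s by exists (r31 - c1); lia.
  subst r31. nia.
- have [k hk] : exists k, c1 = r31 + k by exists (c1 - r31); lia.
  subst c1.
  apply: (m1 k); first lia.
  exists (r12 + r32), t. nia.
Qed.

Lemma wlem (S : pred nat) n1 n2 n3 c1 c3 C2 r12 R13 r21 r23 :
  gen3 S n1 n2 n3 -> 0 < n1 -> 0 < n2 -> 0 < n3 ->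
  minc n1 n2 n3 c1 -> minc n2 n1 n3 C2.+1 -> minc n3 n1 n2 c3 ->
  c1 * n1 = r12 * n2 + R13.+1 * n3 -> C2.+1 * n2 = r21 * n1 + r23 * n3 ->
  0 < r21 -> r12 <= C2 -> R13.+1 < c3 ->
  [/\ S (C2 * n2 + R13 * n3),
      ~ (n1 <= C2 * n2 + R13 * n3 /\ S (C2 * n2 + R13 * n3 - n1)),
      n1 <= C2 * n2 + R13 * n3 + n2 /\ S (C2 * n2 + R13 * n3 + n2 - n1) &
      n1 <= C2 * n2 + R13 * n3 + n3 /\ S (C2 * n2 + R13 * n3 + n3 - n1)].
Proof.
move=> G p1 p2 p3 m1 m2 m3 E1 E2 h21 h12 h13.
have [R21 ?] : exists R21, r21 = R21.+1 by exists r21.-1; lia.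
subst r21.
have c1p : 0 < c1 by nia.
have [C1 ?] : exists C1, c1 = C1.+1 by exists c1.-1; lia.
subst c1.
split.
- by apply/G; exists 0, C2, R13; lia.
- move=> [hle /G [x [y [z hw]]]].
  have hw' : C2 * n2 + R13 * n3 = x.+1 * n1 + y * n2 + z * n3 by lia.
  case: (ltnP C2 y) => hy.
  + have [y' ?] : exists y', y = C2 + y'.+1 by exists (y - C2).-1; lia.
    subst y.
    case: (leqP R13 z) => hz.
    * have [z' ?] : exists z', z = R13 + z' by exists (z - R13); lia.
      subst z; nia.
    * have [K ?] : exists K, R13 = z + K by exists (R13 - z); lia.
      subst R13.
      apply: (m3 K); first by nia.
      exists x.+1, y'.+1; nia.
  + have [a ?] : exists a, C2 = y + a by exists (C2 - y); lia.
    subst C2.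
    case: (ltnP R13 z) => hz.
    * have [z' ?] : exists z', z = R13 + z'.+1 by exists (z - R13).-1; lia.
      subst z.
      apply: (m2 a); first by nia.
      exists x.+1, z'.+1; nia.
    * have [b ?] : exists b, R13 = z + b by exists (R13 - z); lia.
      subst R13.
      case: (ltnP x C1) => hx.
      - apply: (m1 x.+1); first by lia.
        exists a, b; nia.
      - have [e ?] : exists e, x = C1 + e by exists (x - C1); lia.
        subst x.
        case: (leqP a r12) => ha.
        + have [f' ?] : exists f', r12 = a + f' by exists (r12 - a); lia.
          subst r12; nia.
        + have [g ?] : exists g, a = r12 + g by exists (a - r12); lia.
          subst a.
          apply: (m2 g); first by nia.
          exists e, z.+1; nia.
- split; first by nia.
  apply/G; exists R21, 0, (r23 + R13); nia.
- split; first by nia.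
  have [D ?] : exists D, C2 = r12 + D by exists (C2 - r12); lia.
  subst C2.
  apply/G; exists C1, D, 0; nia.
Qed.

Lemma inS_nat (S : pred nat) (n : nat) : inS S n = S n.
Proof. by rewrite /inS absz_nat (_ : (0 <= n%:Z)%R = true). Qed.

Lemma pf_unique (S : pred nat) n1 n2 n3 (f : int) w :
  gen3 S n1 n2 n3 -> (forall a b, S a -> S b -> S (a + b)) ->
  ~~ inS S f -> (forall z, inS S z \/ inS S (f - z)%R) ->
  S w -> ~ (n1 <= w /\ S (w - n1)) ->
  n1 <= w + n2 /\ S (w + n2 - n1) -> n1 <= w + n3 /\ S (w + n3 - n1) ->
  f = (w%:Z - n1%:Z)%R.
Proof.
move=> G add nf sym Sw nA [l2 S2] [l3 S3].
have nv : ~~ inS S (w%:Z - n1%:Z)%R.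
  apply/negP; rewrite /inS => /andP [h1 h2].
  apply: nA; split; first lia.
  have -> : (w - n1)%N = `|(w%:Z - n1%:Z)%R|%N by lia.
  done.
case: (sym (w%:Z - n1%:Z)%R) => [h|]; first by rewrite h in nv.
rewrite /inS => /andP [h0 hS].
move/G: hS => [x [y [z hxyz]]].
have key : (f = w%:Z - n1%:Z + (x * n1 + y * n2 + z * n3)%N)%R.
  by rewrite -hxyz; lia.
have inSf K : (f = K%:Z)%R -> S K -> False.
  by move=> hf SK; move: nf; rewrite hf inS_nat SK.
case: x key {hxyz} => [|x] key.
case: y key => [|y] key.
case: z key => [|z] key.
- by rewrite key; lia.
- exfalso; apply: (inSf (w + n3 - n1 + (z * n3))); first by lia.
  by apply: add => //; apply/G; exists 0, 0, z; lia.
- exfalso; apply: (inSf (w + n2 - n1 + (y * n2 + z * n3))); first by lia.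
  by apply: add => //; apply/G; exists 0, y, z; lia.
- exfalso; apply: (inSf (w + (x * n1 + y * n2 + z * n3))); first by lia.
  by apply: add => //; apply/G; exists x, y, z; lia.
Qed.

Lemma nonglued (S : pred nat) n1 n2 n3 c1 c2 c3 r12 r13 r21 r23 r31 r32 (f : int) :
  gen3 S n1 n2 n3 -> (forall a b, S a -> S b -> S (a + b)) ->
  ~~ inS S f -> (forall z, inS S z \/ inS S (f - z)%R) ->
  0 < n1 -> 0 < n2 -> 0 < n3 ->
  minc n1 n2 n3 c1 -> minc n2 n1 n3 c2 -> minc n3 n1 n2 c3 ->
  c1 * n1 = r12 * n2 + r13 * n3 -> c2 * n2 = r21 * n1 + r23 * n3 ->
  c3 * n3 = r31 * n1 + r32 * n2 ->
  0 < r12 -> 0 < r13 -> 0 < r21 -> 0 < r23 -> 0 < r31 -> 0 < r32 -> False.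
Proof.
move=> G add nf sym p1 p2 p3 m1 m2 m3 E1 E2 E3 q12 q13 q21 q23 q31 q32.
have h13 : r13 < c3 by apply: (lt_r p1 p2 p3 m1 E1 E3).
have h12 : r12 < c2.
  have E1s : c1 * n1 = r13 * n3 + r12 * n2 by lia.
  exact: (lt_r p1 p3 p2 (minc23 m1) E1s E2 q21 q23).
have [C2 ?] : exists C2, c2 = C2.+1 by exists c2.-1; lia.
have [C3 ?] : exists C3, c3 = C3.+1 by exists c3.-1; lia.
have [R12 ?] : exists R12, r12 = R12.+1 by exists r12.-1; lia.
have [R13 ?] : exists R13, r13 = R13.+1 by exists r13.-1; lia.
subst c2 c3 r12 r13.
have [a1 a2 a3 a4] := wlem G p1 p2 p3 m1 m2 m3 E1 E2 q21 (ltnSE h12) h13.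
have E1' : c1 * n1 = R13.+1 * n3 + R12.+1 * n2 by lia.
have [b1 b2 b3 b4] := wlem (gen3_23 G) p1 p3 p2 (minc23 m1) m3 m2 E1' E3 q31 (ltnSE h13) h12.
have e1 := pf_unique G add nf sym a1 a2 a3 a4.
have e2 := pf_unique (gen3_23 G) add nf sym b1 b2 b3 b4.
have ew : C2 * n2 + R13 * n3 = C3 * n3 + R12 * n2 by rewrite e1 in e2; lia.
have [k ?] : exists k, C2 = R12 + k.+1 by exists (C2 - R12).-1; lia.
have [j ?] : exists j, C3 = R13 + j by exists (C3 - R13); lia.
subst C2 C3.
apply: (m2 k.+1); first by lia.
exists 0, j; nia.
Qed.

Lemma ex_min (P : nat -> Prop) : (exists n, P n) ->
  exists n, P n /\ forall m, m < n -> ~ P m.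
Proof.
move=> [n Pn].
suff : forall k n, n <= k -> P n -> exists n, P n /\ forall m, m < n -> ~ P m.
  by move=> /(_ n n (leqnn n) Pn).
elim=> [|k IH] {}n hn {}Pn.
  exists n; split => // m hm; lia.
case: (classic (exists m, m < n /\ P m)) => [[m [hm Pm]]|H].
  by apply: (IH m) => //; lia.
exists n; split => // m hm Pm; apply: H; by exists m.
Qed.

Lemma get_c n1 n2 n3 : 0 < n1 -> 0 < n2 ->
  exists c r s, [/\ 0 < c, c * n1 = r * n2 + s * n3 & minc n1 n2 n3 c].
Proof.
move=> p1 p2.
have [c [[cp [r [s E]]] mn]] := @ex_min (fun k => 0 < k /\ rep2 n2 n3 (k * n1))
  (ex_intro _ n2 (conj p2 (ex_intro _ n1 (ex_intro _ 0 (esym (etrans (addn0 _) (mulnC _ _))))))).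
exists c, r, s; split => // k /andP [kp kc] hr.
by apply: (mn k kc).
Qed.

Lemma gen3_box1 (S : pred nat) a : gen3 S a 0 0 -> a = 1 -> gen3 S 1 0 1.
Proof.
move=> G ea s; rewrite G ea; split=> _.
- by exists s, 0, 0; lia.
- by exists s, 0, 0; lia.
Qed.

Lemma zero3 (S : pred nat) a b : (exists N, forall n, N <= n -> S n) ->
  gen3 S a b 0 -> exists n1 u v m1 d, box S n1 u v m1 d.
Proof.
move=> NS G.
have [a0|ap] := posnP a; last have [b0|bp] := posnP b.
- subst a.
  have b1 : b = 1 by apply: (coprime3 NS G) => //.
  have G1 : gen3 S 1 0 1.
    apply: (@gen3_box1 S b) => //.
    move=> s; rewrite G; split=> -[x [y [z ->]]]; first by exists y, x, z; lia.
    by exists y, x, z; lia.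
  exists 1, 1, 0, 1, 1.
  by apply: (@box_glue S 1 0 1 1 1 1 0 0 G1).
- subst b.
  have a1 : a = 1 by apply: (coprime3 NS G) => //.
  have G1 : gen3 S 1 0 1 by exact: (@gen3_box1 S a).
  exists 1, 1, 0, 1, 1.
  by apply: (@box_glue S 1 0 1 1 1 1 0 0 G1).
- have cab : coprime a b by apply/eqP; apply: (coprime3 NS G); rewrite ?dvdn_gcdl ?dvdn_gcdr.
  exists a, b, 0, a, 1.
  apply: (@box_glue S a 0 b a b 1 0 0 (gen3_23 G)) => //; by rewrite muln1.
Qed.

Lemma box_of_gen3 (S : pred nat) a b c (f : int) :
  (exists N, forall n, N <= n -> S n) -> (forall a b, S a -> S b -> S (a + b)) ->
  gen3 S a b c -> ~~ inS S f -> (forall z, inS S z \/ inS S (f - z)%R) ->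
  exists n1 u v m1 d, box S n1 u v m1 d.
Proof.
move=> NS add G nf sym.
have [c0|p3] := posnP c.
  by subst c; apply: (zero3 NS G).
have [a0|p1] := posnP a.
  by subst a; apply: (zero3 NS (gen3_23 (gen3_12 G))).
have [b0|p2] := posnP b.
  by subst b; apply: (zero3 NS (gen3_23 G)).
have [c1 [r12 [r13 [c1p E1 m1]]]] := get_c c p1 p2.
have [c2 [r21 [r23 [c2p E2 m2]]]] := get_c c p2 p1.
have [c3 [r31 [r32 [c3p E3 m3]]]] := get_c b p3 p1.
have [z|q12] := posnP r12.
  subst r12; have [m1' [d bx]] := glue0 NS G p1 p3 c1p m1 E1.
  by exists a, c, b, m1', d.
have [z|q13] := posnP r13.
  subst r13; have E : c1 * a = r12 * b by lia.
  have [m1' [d bx]] := glue0 NS (gen3_23 G) p1 p2 c1p (minc23 m1) E.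
  by exists a, b, c, m1', d.
have [z|q21] := posnP r21.
  subst r21; have E : c2 * b = r23 * c by lia.
  have [m1' [d bx]] := glue0 NS (gen3_12 G) p2 p3 c2p m2 E.
  by exists b, c, a, m1', d.
have [z|q23] := posnP r23.
  subst r23; have E : c2 * b = r21 * a by lia.
  have [m1' [d bx]] := glue0 NS (gen3_23 (gen3_12 G)) p2 p1 c2p (minc23 m2) E.
  by exists b, a, c, m1', d.
have [z|q31] := posnP r31.
  subst r31; have E : c3 * c = r32 * b by lia.
  have [m1' [d bx]] := glue0 NS (gen3_12 (gen3_23 G)) p3 p2 c3p m3 E.
  by exists c, b, a, m1', d.
have [z|q32] := posnP r32.
  subst r32; have E : c3 * c = r31 * a by lia.
  have [m1' [d bx]] := glue0 NS (gen3_23 (gen3_12 (gen3_23 G))) p3 p1 c3p (minc23 m3) E.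
  by exists c, a, b, m1', d.
exfalso.
exact: (nonglued G add nf sym p1 p2 p3 m1 m2 m3 E1 E2 E3 q12 q13 q21 q23 q31 q32).
Qed.

Lemma sum3 (A : seq nat) (F : nat -> nat) : size A <= 3 ->
  (forall i, size A <= i -> F i = 0) ->
  \sum_(i < size A) F i = F 0 + F 1 + F 2.
Proof.
move=> hA hF.
rewrite (big_ord_widen 3 F hA) big_mkcond /=.
rewrite !big_ord_recr big_ord0 /=.
have e i : (if i < size A then F i else 0) = F i by case: ltnP => // h; rewrite hF.
by rewrite !e add0n.
Qed.

Lemma gen3_of_generates (A : seq nat) (S : pred nat) : generates A S -> size A <= 3 ->
  gen3 S (nth 0 A 0) (nth 0 A 1) (nth 0 A 2).
Proof.
move=> G hA s; rewrite G; split.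
- move=> [c [hc ->]].
  exists (nth 0 c 0), (nth 0 c 1), (nth 0 c 2).
  rewrite (sum3 (F := fun i => nth 0 c i * nth 0 A i)) // => i hi.
  by rewrite (nth_default 0 (s := A)) // muln0.
- move=> [x [y [z ->]]].
  exists (take (size A) [:: x; y; z]); split; first by rewrite size_takel.
  have key i : nth 0 (take (size A) [:: x; y; z]) i * nth 0 A i = nth 0 [:: x; y; z] i * nth 0 A i.
    case: (ltnP i (size A)) => h; first by rewrite nth_take.
    by rewrite (nth_default 0 (s := A)) // !muln0.
  rewrite (sum3 (F := fun i => nth 0 (take (size A) [:: x; y; z]) i * nth 0 A i)) //.
    by rewrite !key.
  by move=> i hi; rewrite (nth_default 0 (s := A)) // muln0.
Qed.

Module PP.

Lemma coef_sp (S : pred nat) N n : (forall m, N <= m -> S m) ->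
  ((semigroup_poly S N)`_n)%R = ((S n)%:R - ((0 < n)%N && S n.-1)%:R)%R.
Proof.
move=> HN; rewrite coef_poly; case: ltnP => // h.
rewrite HN; last lia.
rewrite HN; last lia.
by have -> : 0 < n by lia.
Qed.

Definition ap (S : pred nat) n1 n := S n && ~~ ((n1 <= n) && S (n - n1)).

Lemma box_ap (S : pred nat) n1 u v m1 d n : box S n1 u v m1 d ->
  (ap S n1 n <-> exists a k, [/\ a < m1, k < d & n = a * u + k * v]).
Proof.
move=> [p1 pm pd G U]; split.
- move=> /andP [/G [X [a [k [ha hk E]]]] nA].
  case: X E => [|X] E; first by exists a, k; split => //; lia.
  exfalso; move/negP: nA; apply; apply/andP; split; first by lia.
  by apply/G; exists X, a, k; split => //; lia.
- move=> [a [k [ha hk E]]]; apply/andP; split.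
    by apply/G; exists 0, a, k; split => //; lia.
  apply/negP => /andP [hle /G [X [a' [k' [ha' hk' E']]]]].
  have := U 0 a k X.+1 a' k' ha hk ha' hk'.
  case; [lia | by []..].
Qed.

Definition Wp (m1 d u v : nat) : {poly int} :=
  (\sum_(a < m1) \sum_(k < d) 'X^(a * u + k * v))%R.

Lemma coefW (S : pred nat) n1 u v m1 d n : box S n1 u v m1 d ->
  ((Wp m1 d u v)`_n)%R = (ap S n1 n)%:R%R.
Proof.
move=> bx; have [p1 pm pd G U] := bx.
rewrite /Wp coef_sum.
under eq_bigr => a _ do rewrite coef_sum.
under eq_bigr => a _ do under eq_bigr => k _ do rewrite coefXn.
rewrite pair_bigA /=.
have -> : (\sum_(p : 'I_m1 * 'I_d) (n == p.1 * u + p.2 * v)%N%:R =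
   (#|[pred p : 'I_m1 * 'I_d | (n == p.1 * u + p.2 * v)%N]|)%:R :> int)%R.
  rewrite -sum1_card natr_sum [RHS]big_mkcond /=; apply: eq_bigr => p _.
  by rewrite inE; case: (_ == _).
case: (boolP (ap S n1 n)) => h.
- have [a [k [ha hk E]]] := (box_ap n bx).1 h.
  rewrite (@eq_card1 _ (Ordinal ha, Ordinal hk)) //.
  move=> [a' k'] /=; rewrite !inE /=.
  apply/eqP/eqP => [E'|[-> ->]] //.
  have := U 0 a k 0 a' k' ha hk (ltn_ord a') (ltn_ord k').
  case; first by lia.
  by move=> _ ea ek; apply/pair_equal_spec; split; apply/val_inj.
- rewrite eq_card0 // => -[a k]; rewrite !inE /=.
  apply/negP => /eqP E; move/negP: h; apply; apply/(box_ap n bx).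
  by exists a, k; split.
Qed.

Lemma box_add (S : pred nat) n1 u v m1 d s : box S n1 u v m1 d -> S s -> S (s + n1).
Proof.
move=> [p1 pm pd G U] /G [X [a [k [ha hk E]]]].
by apply/G; exists X.+1, a, k; split => //; lia.
Qed.

Lemma sp_ident (S : pred nat) N n1 u v m1 d : (forall m, N <= m -> S m) ->
  box S n1 u v m1 d ->
  (semigroup_poly S N * (1 - 'X^n1) = (1 - 'X) * Wp m1 d u v)%R.
Proof.
move=> HN bx; have p1 : 0 < n1 by case: bx.
apply/polyP => n.
rewrite mulrBr mulr1 mulrBl mul1r !coefB coefMXn coefXM !(coefW _ bx) !coef_sp //.
have add := box_add bx.
rewrite /ap.
case: n => [|m] /=.
  rewrite p1.
  have -> : (n1 <= 0) = false by lia.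
  by rewrite /= andbT !subr0.
case: (ltngtP m.+1 n1) => h.
- have -> : (n1 <= m) = false by lia.
  by rewrite /= !andbT subr0.
- have -> : (n1 <= m) by lia.
  have -> : m.+1 - n1 = (m - n1).+1 by lia.
  rewrite /=.
  have i1 := add (m - n1).+1; have i2 := add (m - n1).
  have e1 : (m - n1).+1 + n1 = m.+1 by lia.
  have e2 : m - n1 + n1 = m by lia.
  rewrite e1 in i1; rewrite e2 in i2.
  move: i1 i2.
  case: (S m.+1); case: (S m); case: (S (m - n1).+1); case: (S (m - n1)) => /= i1 i2;
  rewrite ?subr0 ?sub0r ?subrr ?opprK //; try by [have := i1 isT | have := i2 isT].
- have Sn1 : S n1 by case: bx => _ pm pd G _; apply/G; exists 1, 0, 0; split => //; lia.
  rewrite -h in Sn1 *.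
  rewrite subnn /=.
  have -> : (m.+1 <= m) = false by lia.
  have S0 : S 0 by case: bx => _ pm pd G _; apply/G; exists 0, 0, 0; split => //; lia.
  rewrite Sn1 S0 /=.
  case: (S m) => /=; rewrite ?subr0 ?sub0r ?subrr //.
Qed.

Local Open Scope ring_scope.

Lemma geo_root (z : algC) (p u : nat) : (0 < p)%N ->
  \sum_(i < p) z ^+ (i * u) = 0 -> `|z| <= 1.
Proof.
move=> pp hs.
have hs' : \sum_(i < p) (z ^+ u) ^+ i = 0.
  by rewrite -[RHS]hs; apply: eq_bigr => i _; rewrite -exprM mulnC.
case: (eqVneq (z ^+ u) 1) => hz.
  move: hs'; under eq_bigr => i _ do rewrite hz expr1n.
  rewrite sumr_const card_ord => /eqP; rewrite pnatr_eq0; lia.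
have up : (0 < u)%N by case: u hz {hs hs'} => //; rewrite expr0 eqxx.
have := subrXX 1 (z ^+ u) p.
under eq_bigr => i _ do rewrite expr1n mul1r.
rewrite hs' mulr0 expr1n => /eqP; rewrite subr_eq0 => /eqP /esym h1.
have : `|z| ^+ (u * p) = 1 by rewrite -normrX exprM h1 normr1.
move/eqP; rewrite pexpr_eq1 ?normr_ge0 ?muln_gt0 ?up //.
by move/eqP ->.
Qed.

Lemma box_cyclo (S : pred nat) N n1 u v m1 d : (forall m, (N <= m)%N -> S m) ->
  box S n1 u v m1 d -> cyclotomic_semigroup S.
Proof.
move=> HN bx; have [p1 pm pd _ _] := bx.
exists N; split => // z hz.
have Id := sp_ident HN bx.
have := congr1 (fun p => (map_poly (intr : int -> algC) p).[z]) Id.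
have e1 : map_poly (intr : int -> algC) ('X^n1) = 'X^n1 := map_polyXn _ _.
have e2 : map_poly (intr : int -> algC) 'X = 'X := map_polyX _.
have e3 : forall n, map_poly (intr : int -> algC) ('X^n) = 'X^n := fun n => map_polyXn _ _.
rewrite /= !rmorphM !rmorphB !rmorph1 /= e1 e2 !hornerM.
move/rootP: hz => ->; rewrite mul0r.
rewrite /Wp rmorph_sum horner_sum.
under eq_bigr => a _ do rewrite rmorph_sum horner_sum.
under eq_bigr => a _ do under eq_bigr => k _ do rewrite /= e3 hornerXn exprD.
under eq_bigr => a _ do rewrite -mulr_sumr.
rewrite -mulr_suml !hornerE.
move/esym/eqP; rewrite !mulf_eq0 => H.
have [H2|h] := orP H; last by move/eqP: h => h; exact: (geo_root pd h).
have [h|h] := orP H2; last by move/eqP: h => h; exact: (geo_root pm h).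
have -> : z = 1 by exact: esym (subr0_eq (eqP h)).
by rewrite normr1.
Qed.

End PP.
Import PP.
Module CC.
Local Open Scope ring_scope.

Lemma prod_norm_one (rs : seq algC) : (forall r, r \in rs -> `|r| <= 1) ->
  \prod_(r <- rs) `|r| = 1 -> forall r, r \in rs -> `|r| = 1.
Proof.
elim: rs => [|r0 rs IH] //= H; rewrite big_cons => E r.
have h0 : `|r0| <= 1 by apply: H; rewrite mem_head.
have hP : \prod_(r <- rs) `|r| <= 1.
  rewrite big_seq; apply: prodr_ile1 => i hi; rewrite normr_ge0 /=.
  by apply: H; rewrite inE hi orbT.
have hPg : 0 <= \prod_(r <- rs) `|r| by apply: prodr_ge0 => i _; rewrite normr_ge0.
have a1 : `|r0| = 1.
  apply/le_anti; rewrite h0 /=.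
  by rewrite -[X in X <= _]E -[X in _ <= X]mulr1 ler_wpM2l.
have P1 : \prod_(r <- rs) `|r| = 1 by rewrite a1 mul1r in E.
rewrite inE => /orP [/eqP -> //|hr].
apply: IH => //.
move=> x hx; apply: H; by rewrite inE hx orbT.
Qed.

Lemma prod_const_seq (rs : seq algC) (x : algC) : \prod_(r <- rs) x = x ^+ size rs.
Proof. by elim: rs => [|r rs IH]; rewrite ?big_nil ?expr0 // big_cons IH exprS. Qed.

Lemma poly_eq_nz (q p : {poly algC}) : (forall x, x != 0 -> q.[x] = p.[x]) -> q = p.
Proof.
move=> H; apply/eqP; rewrite -subr_eq0; apply/negPn/negP => nz.
set K := size (q - p).
have H1 : all (root (q - p)) [seq (i.+1)%:R | i <- iota 0 K].
  apply/allP => y /mapP [i _ ->]; rewrite /root hornerD hornerN H ?subrr //.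
  by rewrite pnatr_eq0.
have H2 : uniq [seq (i.+1)%:R : algC | i <- iota 0 K].
  rewrite map_inj_uniq ?iota_uniq // => i j /eqP; rewrite eqr_nat => /eqP [].
  by [].
have := max_poly_roots nz H1 H2.
by rewrite size_map size_iota ltnn.
Qed.

Lemma palin (p : {poly algC}) : p \is monic -> p.[0] = 1 ->
  map_poly (@Num.conj algC) p = p -> (forall z, root p z -> `|z| <= 1) ->
  forall i, (i <= (size p).-1)%N -> p`_i = p`_((size p).-1 - i).
Proof.
move=> mon p0 pc proot.
have [rs Hp] := closed_field_poly_normal p.
move/monicP: (mon) => lc.
rewrite lc scale1r in Hp.
set n := size rs.
have sp : size p = n.+1 by rewrite Hp size_prod_XsubC.
have rroot r : r \in rs -> `|r| <= 1.
  by move=> hr; apply: proot; rewrite Hp root_prod_XsubC.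
have p0' : \prod_(r <- rs) (- r) = 1.
  rewrite -[RHS]p0 Hp horner_prod; apply: eq_bigr => r _.
  by rewrite hornerXsubC sub0r.
have n1 : forall r, r \in rs -> `|r| = 1.
  apply: prod_norm_one => //.
  have e := congr1 (fun t => `|t|) p0'.
  rewrite /= normr1 normr_prod in e.
  by rewrite -[RHS]e; apply: eq_bigr => r _; rewrite normrN.
have rinv r : r \in rs -> r^-1 = r^*.
  by move=> hr; rewrite invC_norm n1 // expr1n invr1 mul1r.
have rnz r : r \in rs -> r != 0.
  by move=> hr; rewrite -normr_eq0 n1 // oner_eq0.
have Ev x : x != 0 -> x ^+ n * p.[x^-1] = p.[x].
  move=> xnz.
  rewrite {1}Hp horner_prod -prod_const_seq -big_split /=.
  have e1 : \prod_(r <- rs) (x * ('X - r%:P).[x^-1]) =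
            \prod_(r <- rs) ((x - r^*) * (- r)).
    rewrite big_seq_cond [RHS]big_seq_cond; apply: eq_bigr => r /andP [hr _].
    rewrite hornerXsubC -(rinv r hr) mulrBr mulfV // mulrBl.
    by rewrite mulrN mulrN mulVf ?rnz // opprK addrC.
  rewrite e1 big_split /= p0' mulr1.
  rewrite -pc Hp rmorph_prod horner_prod; apply: eq_bigr => r _.
  by rewrite /= map_polyXsubC hornerXsubC.
have qp : \poly_(i < n.+1) p`_(n - i) = p.
  apply: poly_eq_nz => x xnz.
  rewrite -(Ev x xnz) horner_poly (horner_coef p) sp mulr_sumr.
  rewrite (reindex_inj rev_ord_inj) /=; apply: eq_bigr => i _.
  have hi : (i <= n)%N by have := ltn_ord i; lia.
  have -> : (n - (n.+1 - i.+1) = i)%N by lia.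
  have -> : (n.+1 - i.+1 = n - i)%N by lia.
  rewrite exprVn mulrCA exprB ?unitfE //.
move=> i hi; rewrite sp /= in hi *.
by rewrite -[in LHS]qp coef_poly ltnS hi.
Qed.

Lemma boolint (a b c d : bool) : (a%:R - b%:R = c%:R - d%:R :> int) -> b = ~~ c -> a = ~~ d.
Proof. by case: a; case: b; case: c; case: d. Qed.

Lemma cyclo_sym (S : pred nat) : numerical_semigroup S -> cyclotomic_semigroup S ->
  symmetric_semigroup S.
Proof.
move=> [S0 add _] [N [HN Hr]].
case: (boolP [forall i : 'I_N, S i]) => hall.
  have allS n : S n.
    case: (ltnP n N) => h; last exact: HN.
    by move/forallP: hall => /(_ (Ordinal h)).
  exists (-1); split; first split.
  - by rewrite /inS.
  - move=> z hz; rewrite /inS allS andbT; lia.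
  - move=> z; rewrite /inS !allS !andbT.
    case: (lerP 0 z) => h; [by left | right; lia].
move/forallPn: hall => [i0 hi0].
have bnd k : ~~ S k -> (k <= N)%N.
  by move=> h; case: (leqP k N) => // /ltnW /HN; rewrite (negbTE h).
have [F nSF Fmax] := ex_maxnP (ex_intro (fun k => ~~ S k) _ hi0) bnd.
have SgtF k : (F < k)%N -> S k.
  by move=> h; apply: contraT => /Fmax; lia.
have FN : (F < N)%N by case: (leqP N F) => // /HN; rewrite (negbTE nSF).
set Q := semigroup_poly S N.
have cQ k : Q`_k = ((S k)%:R - ((0 < k)%N && S k.-1)%:R) := coef_sp k HN.
have sQ : size Q = F.+2.
  apply/eqP; rewrite eqn_leq; apply/andP; split.
    apply/leq_sizeP => j hj; rewrite cQ !SgtF; [|lia|lia].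
    by have -> : (0 < j)%N by lia.
  rewrite ltnNge; apply/negP => /leq_sizeP /(_ F.+1 (leqnn _)).
  by rewrite cQ SgtF //= (negbTE nSF).
set p := map_poly (intr : int -> algC) Q.
have cp k : p`_k = (Q`_k)%:~R by rewrite coef_map_id0.
have sp : size p = F.+2 by rewrite size_map_inj_poly ?sQ //; exact: intr_inj.
have mon : p \is monic.
  rewrite monicE /lead_coef sp cp cQ SgtF //= (negbTE nSF) /=.
  by rewrite subr0.
have p0 : p.[0] = 1 by rewrite horner_coef0 cp cQ S0 /= subr0.
have pc : map_poly (@Num.conj algC) p = p.
  rewrite /p -map_poly_comp; apply: eq_map_poly => k /=.
  exact: (rmorph_int (@Num.conj algC : {rmorphism algC -> algC})).
have pal := palin mon p0 pc Hr.
rewrite sp /= in pal.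
have palQ k : (k <= F.+1)%N -> Q`_k = Q`_(F.+1 - k).
  by move=> hk; apply: (@intr_inj algC); rewrite -!cp pal.
have key : forall k, (k <= F)%N -> S k = ~~ S (F - k)%N.
  elim=> [|k IH] hk.
    by rewrite S0 subn0 nSF.
  have e := palQ k.+1 (leq_trans hk (leqnSn _)).
  have E1 : (F.+1 - k.+1 = F - k)%N by lia.
  have E2 : (0 < F - k)%N by lia.
  have E3 : ((F - k).-1 = F - k.+1)%N by lia.
  rewrite E1 !cQ /= E2 E3 in e.
  exact: (boolint e (IH (ltnW hk))).
exists F; split; first split.
- by rewrite inS_nat.
- move=> z hz; rewrite /inS; apply/andP; split; first lia.
  by apply: SgtF; lia.
- move=> z.
  case: (ltrP z 0) => hz0.
    right; rewrite /inS; apply/andP; split; first lia.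
    by apply: SgtF; lia.
  case: (ltrP (F%:Z) z) => hzF.
    left; rewrite /inS; apply/andP; split; first lia.
    by apply: SgtF; lia.
  have [k ek] : exists k : nat, z = k%:Z by exists `|z|%N; lia.
  subst z.
  have hk : (k <= F)%N by lia.
  have -> : (F%:Z - k%:Z = (F - k)%N%:Z)%R by lia.
  rewrite !inS_nat key //.
  by case: (S (F - k)%N); [right|left].
Qed.

End CC.
Import CC.

Unset Implicit Arguments.

Theorem lemma5 (S : pred nat) :
  numerical_semigroup S ->
  (exists e, is_embdim S e /\ e <= 3) ->
  (cyclotomic_semigroup S <-> symmetric_semigroup S).
Proof.
move=> NS [e [[[A [hA G]] _] he]].
split; first exact: cyclo_sym.
move=> [f [[nf _] sym]].
have [S0 add [N HN]] := NS.
have G3 := gen3_of_generates G (ltac:(rewrite hA; exact: he)).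
have [n1 [u [v [m1 [d bx]]]]] := box_of_gen3 (ex_intro _ N HN) add G3 nf sym.
exact: box_cyclo HN bx.
Qed.
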